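(* Let $N\ge3$. One has $\pi_Y\circ\mathcal F=\mathcal F_Y\circ\pi_{\widetilde Y}$ as maps $\mathbb{Q}(\mu_N)\langle\langle\widetilde X\rangle\rangle\to\mathbb{Q}(\mu_N)\langle\langle Y\rangle\rangle$, and $\mathbf p\circ\mathcal F=\mathcal F\circ\widetilde{\mathbf q}$ as maps $\mathbb{Q}(\mu_N)\langle\langle\widetilde X\rangle\rangle\to\mathbb{Q}(\mu_N)\langle\langle X\rangle\rangle$.
   Context: $\zeta_N=\exp(2\pi i/N)$, $\mu_N$ the complex $N$-th roots of unity, $\iota:\{1,\dots,N\}\to\mathbb{Z}/N\mathbb{Z}$ the residue-class bijection. $K\langle\langle\mathcal L\rangle\rangle$: noncommutative formal power series over $\mathcal L$. Alphabets $X=\{x_0\}\cup\{x_\zeta:\zeta\in\mu_N\}$, $Y=\{y_{k,\zeta}:k\ge1,\zeta\in\mu_N\}$, $\widetilde X=\{\tilde x\}\cup\{\tilde x_\alpha:\alpha\in\mathbb{Z}/N\mathbb{Z}\}$, $\widetilde Y=\{\tilde y_{k,\alpha}:k\ge1,\alpha\in\mathbb{Z}/N\mathbb{Z}\}$, with $y_{k,\zeta}\equiv x_0^{k-1}x_\zeta$ and $\tilde y_{k,\alpha}\equiv\tilde x^{k-1}\tilde x_\alpha$. Using the decompositions $K\langle\langle X\rangle\rangle=K\langle\langle Y\rangle\rangle\oplus K\langle\langle X\rangle\rangle x_0$ and $K\langle\langle\widetilde X\rangle\rangle=K\langle\langle\widetilde Y\rangle\rangle\oplus K\langle\langle\widetilde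 X\rangle\rangle\tilde x$, $\pi_Y$ and $\pi_{\widetilde Y}$ are the projections onto the first summands. $\mathbf p$ is the linear automorphism of $K\langle\langle X\rangle\rangle$ with $\mathbf p(x_0^{k_1-1}x_{\zeta_1}x_0^{k_2-1}x_{\zeta_2}\cdots x_0^{k_r-1}x_{\zeta_r}x_0^{k_{r+1}-1})=x_0^{k_1-1}x_{\zeta_1}x_0^{k_2-1}x_{\zeta_1\zeta_2}\cdots x_0^{k_r-1}x_{\zeta_1\cdots\zeta_r}x_0^{k_{r+1}-1}$, and $\widetilde{\mathbf q}$ is the linear automorphism of $K\langle\langle\widetilde X\rangle\rangle$ with $\widetilde{\mathbf q}(\tilde x^{k_1-1}\tilde x_{\alpha_1}\cdots\tilde x^{k_r-1}\tilde x_{\alpha_r}\tilde x^{k_{r+1}-1})=\tilde x^{k_1-1}\tilde x_{\alpha_1-\alpha_2}\cdots\tilde x^{k_{r-1}-1}\tilde x_{\alpha_{r-1}-\alpha_r}\tilde x^{k_r-1}\tilde x_{\alpha_r}\tilde x^{k_{r+1}-1}$ ($r\ge0$, $k_i\ge1$). $\mathcal F:\mathbb{Q}(\mu_N)\langle\langle\widetilde X\rangle\rangle\to\mathbb{Q}(\mu_N)\langle\langle X\rangle\rangle$ is the continuous algebra isomorphism with $\tilde x\mapsto x_0$, $\tilde x_\alpha\mapsto\sum_{m=1}^N\zeta_N^{-m\iota^{-1}(\alpha)}x_{\zeta_N^m}$, and $\mathcal F_Y$ is its restriction $\mathbb{Q}(\mu_N)\langle\langle\widetilde Y\rangle\rangle\to\mathbb{Q}(\mu_N)\langle\langle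 Y\rangle\rangle$, $\tilde y_{k,\alpha}\mapsto\sum_{m=1}^N\zeta_N^{-m\iota^{-1}(\alpha)}y_{k,\zeta_N^m}$. *)

(* Defs.v *)
From mathcomp Require Import all_boot all_order all_algebra all_field.
Set Implicit Arguments. Unset Strict Implicit. Unset Printing Implicit Defensive.
Import Order.TTheory GRing.Theory Num.Theory.
Local Open Scope ring_scope.

(* Complex numbers: algebraic closure algC (contains Q(mu_N)). *)
(* zeta_N = exp(2 pi i / N) = (exp(pi i / N))^2, and N.-root (-1) is the
   N-th root of -1 of minimal nonnegative argument, i.e. exp(pi i / N). *)
Definition zeta (N : nat) : algC := (N.-root (-1)) ^+ 2.

Definition inQmu (N : nat) (c : algC) : Prop :=
  exists p : {poly rat}, c = (map_poly ratr p).[zeta N].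

(* Alphabet X : None = x_0, Some m = x_{zeta_N^m}  (m : Z/NZ). *)
Definition XL (N : nat) := option 'Z_N.
(* Alphabet X~ : None = x~, Some a = x~_a  (a : Z/NZ). *)
Definition XtL (N : nat) := option 'Z_N.

Definition series (L : Type) := seq L -> algC.

Definition coeffs_in_Qmu (N : nat) (L : Type) (S : series L) : Prop :=
  forall w, inQmu N (S w).

(* Linear (continuous) extension to series of a length-preserving map on
   words f : (p S) has coefficient at u equal to sum of S w over f w = u. *)
Definition lin_ext (L : finType) (f : seq L -> seq L) (S : series L)
  : series L :=
  fun u => \sum_(w : (size u).-tuple L | f w == u) S w.

Definition piY (N : nat) (S : series (XL N)) : series (XL N) :=
  fun u => if last (Some 0) u == None then 0 else S u.
Definition piYt (N : nat) (S : series (XtL N)) : series (XtL N) :=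
  fun u => if last (Some 0) u == None then 0 else S u.

Definition iota_inv (N : nat) (a : 'Z_N) : nat :=
  if val a == 0%N then N else val a.

Definition Fletter (N : nat) (a : XtL N) (b : XL N) : algC :=
  match a, b with
  | None, None => 1
  | Some al, Some m => (zeta N) ^- (iota_inv m * iota_inv al)
  | _, _ => 0
  end.

(* The continuous algebra morphism F : x~ |-> x_0,
   x~_a |-> sum_{m=1}^N zeta_N^{-m iota^{-1}(a)} x_{zeta_N^m};
   it maps words of length n to homogeneous polynomials of degree n. *)
Definition F (N : nat) (S : series (XtL N)) : series (XL N) :=
  fun u => \sum_(w : (size u).-tuple (XtL N))
             S w * \prod_(i < size u) Fletter (tnth w i) (nth None u i).

(* F_Y : restriction of F to Q(mu_N)<<Y~>> (Y-words identified with
   X-words not ending in x_0 via y_{k,z} = x_0^{k-1} x_z). *)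
Definition FY (N : nat) (S : series (XtL N)) : series (XL N) := F S.

(* Word map underlying p : x_{z_i} |-> x_{z_1 ... z_i}. *)
Fixpoint pword_acc (N : nat) (acc : 'Z_N) (w : seq (XL N)) : seq (XL N) :=
  match w with
  | [::] => [::]
  | None :: w' => None :: pword_acc acc w'
  | Some k :: w' => Some (acc + k) :: pword_acc (acc + k) w'
  end.
Definition pword (N : nat) (w : seq (XL N)) := pword_acc 0 w.
Definition p (N : nat) (S : series (XL N)) : series (XL N) :=
  lin_ext (@pword N) S.

(* Word map underlying q~ : x~_{a_i} |-> x~_{a_i - a_{i+1}} (i < r),
   x~_{a_r} unchanged. *)
Fixpoint firstA (N : nat) (w : seq (XtL N)) : 'Z_N :=
  match w with
  | [::] => 0
  | None :: w' => firstA w'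
  | Some a :: _ => a
  end.
Fixpoint qword (N : nat) (w : seq (XtL N)) : seq (XtL N) :=
  match w with
  | [::] => [::]
  | None :: w' => None :: qword w'
  | Some a :: w' => Some (a - firstA w') :: qword w'
  end.
Definition qt (N : nat) (S : series (XtL N)) : series (XtL N) :=
  lin_ext (@qword N) S.

(* Main.v *)
Require Import Defs.
From Stdlib Require Import FunctionalExtensionality.
From mathcomp Require Import all_boot all_order all_algebra all_field.
Import Order.TTheory GRing.Theory Num.Theory.
Set Implicit Arguments. Unset Strict Implicit. Unset Printing Implicit Defensive.
Local Open Scope ring_scope.

Lemma val_ZpM N (x y : 'Z_N) : val (x * y) = ((val x * val y) %% (Zp_trunc N).+2)%N.
Proof. by []. Qed.
Lemma val_ZpD N (x y : 'Z_N) : val (x + y) = ((val x + val y) %% (Zp_trunc N).+2)%N.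
Proof. by []. Qed.

Lemma zetaN N : (0 < N)%N -> zeta N ^+ N = 1.
Proof.
move=> N0; rewrite /zeta -exprM mulnC exprM rootCK //.
by rewrite expr2 mulrNN mulr1.
Qed.

Lemma zetaM N : (1 < N)%N -> zeta N ^+ (Zp_trunc N).+2 = 1.
Proof. by move=> N1; rewrite (Zp_cast N1) zetaN // ltnW. Qed.

Definition ez N (x : 'Z_N) : algC := (zeta N ^+ val x)^-1.

Lemma ezD N (x y : 'Z_N) : (1 < N)%N -> ez (x + y) = ez x * ez y.
Proof.
move=> N1; rewrite /ez val_ZpD expr_mod ?zetaM ?exprD ?invfM //.
Qed.

Lemma ez0 N : ez (0 : 'Z_N) = 1.
Proof. by rewrite /ez /= expr0 invr1. Qed.

Lemma iota_mod N (m : 'Z_N) : (1 < N)%N -> (iota_inv m %% N = val m %% N)%N.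
Proof.
move=> N1; rewrite /iota_inv; case: eqP => [->|_] //.
by rewrite modnn mod0n.
Qed.

Lemma Fletter_SS N (a m : 'Z_N) : (1 < N)%N ->
  Fletter (Some a) (Some m) = ez (m * a).
Proof.
move=> N1; rewrite /Fletter /ez val_ZpM expr_mod ?zetaM //.
congr (_ ^-1).
have Z := zetaN (ltnW N1).
by rewrite -(expr_mod _ Z) -modnMm !iota_mod // modnMm expr_mod.
Qed.

Fixpoint Fprod N (w u : seq (XL N)) : algC :=
  match w, u with
  | a :: w', b :: u' => Fletter a b * Fprod w' u'
  | _, _ => 1
  end.

Lemma prod_Fprod N n (w u : seq (XL N)) : size w = n -> size u = n ->
  \prod_(i < n) Fletter (nth None w i) (nth None u i) = Fprod w u.
Proof.
elim: n w u => [|n IH] [|a w] [|b u] //=; first by rewrite big_ord0.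
by move=> [Hw] [Hu]; rewrite big_ord_recl /= IH.
Qed.

Definition Fsum N n (S : series (XtL N)) (u : seq (XL N)) : algC :=
  \sum_(w : n.-tuple (XtL N)) S w * Fprod w u.

Lemma F_Fsum N (S : series (XtL N)) u : F S u = Fsum (size u) S u.
Proof.
rewrite /F /Fsum; apply: eq_bigr => w _; congr (_ * _).
rewrite -(prod_Fprod (n := size u)) ?size_tuple //; apply: eq_bigr => i _.
by rewrite (tnth_nth None).
Qed.

Definition lsum (L : finType) n (f : seq L -> seq L) (S : series L) u :=
  \sum_(w : n.-tuple L | f w == u) S w.

Lemma lin_lsum (L : finType) f (S : series L) u : lin_ext f S u = lsum (size u) f S u.
Proof. by []. Qed.

Fixpoint punword_acc N (acc : 'Z_N) (u : seq (XL N)) : seq (XL N) :=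
  match u with
  | [::] => [::]
  | None :: u' => None :: punword_acc acc u'
  | Some m :: u' => Some (m - acc) :: punword_acc m u'
  end.

Lemma size_punword N (acc : 'Z_N) u : size (punword_acc acc u) = size u.
Proof. by elim: u acc => [|[m|] u IH] acc //=; rewrite IH. Qed.

Lemma size_pword N (acc : 'Z_N) u : size (pword_acc acc u) = size u.
Proof. by elim: u acc => [|[m|] u IH] acc //=; rewrite IH. Qed.

Lemma size_qword N (u : seq (XtL N)) : size (qword u) = size u.
Proof. by elim: u => [|[m|] u IH] //=; rewrite IH. Qed.

Lemma pwordK N (acc : 'Z_N) u : pword_acc acc (punword_acc acc u) = u.
Proof.
elim: u acc => [|[m|] u IH] acc //=; last by rewrite IH.
have -> : acc + (m - acc) = m by rewrite addrC subrK.
by rewrite IH.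
Qed.

Lemma punwordK N (acc : 'Z_N) v : punword_acc acc (pword_acc acc v) = v.
Proof.
elim: v acc => [|[m|] u IH] acc //=; last by rewrite IH.
have -> : acc + m - acc = m by rewrite addrC addKr.
by rewrite IH.
Qed.

Arguments Fletter : simpl never.

Lemma key N (w u : seq (XL N)) (acc : 'Z_N) : (1 < N)%N -> size w = size u ->
  Fprod w (punword_acc acc u) * ez (acc * firstA w) = Fprod (qword w) u.
Proof.
move=> N1; elim: w u acc => [|[a|] w IH] [|[m|] u] acc //=.
- by rewrite mul1r mulr0 ez0.
- move=> [Hs]; rewrite !Fletter_SS // -(IH u m Hs).
  rewrite mulrAC -ezD // mulrCA -ezD // mulrC; congr (_ * ez _).
  by rewrite mulrBl subrK mulrBr subrK.
- by rewrite !mul0r.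
- by rewrite !mul0r.
- by move=> [Hs]; rewrite !mul1r IH.
Qed.

Lemma Fprod_last0 N (w u : seq (XL N)) d e : size w = size u ->
  (last d w == None) != (last e u == None) -> Fletter d e * Fprod w u = 0.
Proof.
elim: w u d e => [|a w IH] [|b u] d e //=.
- by case: d => [?|]; case: e => [?|] //= _; rewrite /Fletter mulr1.
- by move=> [Hs] H; rewrite (IH u a b Hs H) mulr0.
Qed.

Lemma Fprod_last N (w u : seq (XL N)) : size w = size u ->
  (last (Some 0) w == None) != (last (Some 0) u == None) -> Fprod w u = 0.
Proof.
case: w u => [|a w] [|b u] //= [Hs] H.
exact: Fprod_last0.
Qed.

Theorem lemma3p3 (N : nat) (HN : (3 <= N)%N) :
  (forall S : series (XtL N), coeffs_in_Qmu N S ->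
     piY (F S) = FY (piYt S)) /\
  (forall S : series (XtL N), coeffs_in_Qmu N S ->
     p (F S) = F (qt S)).
Proof.
have N1 : (1 < N)%N by apply: leq_trans HN.
split=> S _; apply: functional_extensionality => u.
- rewrite /piY /FY !F_Fsum /Fsum.
  case: ifP => Hu.
    rewrite big1 // => w _; rewrite /piYt; case: ifP => Hw; first by rewrite mul0r.
    by rewrite Fprod_last ?mulr0 ?size_tuple // Hu Hw.
  apply: eq_bigr => w _; rewrite /piYt; case: ifP => Hw //.
  by rewrite Fprod_last ?mulr0 ?size_tuple // Hu Hw.
- rewrite /p lin_lsum /lsum F_Fsum.
  have Hsz : size (punword_acc 0 u) == size u by rewrite size_punword.
  transitivity (\sum_(v : (size u).-tuple (XL N) | pword v == u) Fsum (size u) S v).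
    by apply: eq_bigr => v _; rewrite F_Fsum size_tuple.
  rewrite (big_pred1 (Tuple Hsz)); last first.
    move=> v /=; apply/eqP/eqP => [H|->].
      apply: val_inj => /=; transitivity (punword_acc 0 (pword v)).
        by rewrite /pword punwordK.
      by rewrite H.
    by rewrite /pword /= pwordK.
  rewrite /Fsum.
  transitivity (\sum_(w : (size u).-tuple (XtL N)) \sum_(w' : (size u).-tuple (XtL N) | qword w == w') S w * Fprod w' u).
    apply: eq_bigr => w _.
    have Hq : size (qword w) == size u by rewrite size_qword size_tuple.
    rewrite (big_pred1 (Tuple Hq)); last first.
      by move=> w' /=; rewrite -val_eqE /=; apply/eqP/eqP => ->.
    by rewrite /= -(key 0 N1) ?size_punword ?size_tuple // mul0r ez0 mulr1.
  rewrite (exchange_big_dep xpredT) //=; apply: eq_bigr => w' _.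
  by rewrite /qt lin_lsum /lsum size_tuple big_distrl.
Qed.
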